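(* Let $S,E\ge0$ be integers and let $\mathbf c=(c_1,\dots,c_m)$, $\mathbf d=(d_1,\dots,d_m)$ be partitions with $\mathbf c\ne\mathbf d$. Let $\ell=\max\{i: c_i\ne d_i\}$, $f=\max\{i\in\{1,\dots,\ell\}: c_i<d_{i-1}\}$ (with $d_0=+\infty$) and $f'=\max\{i\in\{1,\dots,\ell\}: d_i<c_{i-1}\}$ (with $c_0=+\infty$). 1. There exists a partition $\mathbf g=(g_1,\dots,g_{m+1})$ with $\sum_{i=1}^{m+1}g_i=S$, $\mathbf g\prec'\mathbf c$ and $\mathbf g\prec'\mathbf d$ if and only if $S\le\sum_{i=1}^m\min\{c_i,d_i\}+\max\{c_f,d_{f'}\}$. 2. If $f>1$ and $f'>1$, there exists a partition $\mathbf e=(e_1,\dots,e_{m-1})$ with $\sum_{i=1}^{m-1}e_i=E$, $\mathbf c\prec'\mathbf e$ and $\mathbf d\prec'\mathbf e$ if and only if $E\ge\sum_{i=1}^m\max\{c_i,d_i\}-\max\{c_f,d_{f'}\}$. 3. If $f=1$ or $f'=1$, there exists a partition $\mathbf e=(e_1,\dots,e_{m-1})$ with $\sum_{i=1}^{m-1}e_i=E$, $\mathbf c\prec'\mathbf e$ and $\mathbf d\prec'\mathbf e$ if and only if $$E=\sum_{i=1}^m\max\{c_i,d_i\}-\max\{c_f,d_{f'}\}\quad\text{or}\quad E\ge\sum_{i=1}^m\max\{c_i,d_i\}-\max\{c_{f+1},d_{f'+1}\};$$ equivalently, if and only if $E=\sum_{i=2}^m\max\{c_i,d_i\}$ or 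$E\ge\max\{c_1,d_1\}+\sum_{i=3}^m\max\{c_i,d_i\}$.
   Context: A partition is a nonincreasing finite sequence of nonnegative integers; for a sequence $(a_1,\dots,a_m)$ one sets $a_i=-\infty$ for $i>m$. 1-step generalized majorization: for nonincreasing integer sequences $\mathbf g=(g_1,\dots,g_{k+1})$ and $\mathbf a=(a_1,\dots,a_k)$, set $a_{k+1}=-\infty$ and $h=\min\{i: a_i<g_i\}$; then $\mathbf g\prec'\mathbf a$ means $a_i=g_{i+1}$ for all $h\le i\le k$. Empty sums are $0$. *)

(* Defs.v *)
From mathcomp Require Import all_boot.
Set Implicit Arguments.
Unset Strict Implicit.
Unset Printing Implicit Defensive.

Definition is_partition (s : seq nat) : Prop := sorted geq s.

(* 1-based access: [at_ s i] is s_i for 1 <= i <= size s. *)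
Definition at_ (s : seq nat) (i : nat) : nat := nth 0 s i.-1.

(* 1-based access with the convention s_i = -oo for i > size s
   (None stands for -oo); only used for i >= 1. *)
Definition xat (s : seq nat) (i : nat) : option nat :=
  if i.-1 < size s then Some (nth 0 s i.-1) else None.

Definition omaxn (x y : option nat) : option nat :=
  match x, y with
  | Some a, Some b => Some (maxn a b)
  | Some a, None => Some a
  | None, Some b => Some b
  | None, None => None
  end.

(* With 0-based indices: a_k = -oo, h = min{i : a_i < g_i} (= k if no
   i < k satisfies a_i < g_i), and we require a_i = g_{i+1} for h <= i < k. *)
Definition prec1 (g a : seq nat) : Prop :=
  size g = (size a).+1 /\
  let h := find (fun i => nth 0 a i < nth 0 g i) (iota 0 (size a)) in
  forall i, h <= i < size a -> nth 0 a i = nth 0 g i.+1.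

Definition ell (c d : seq nat) : nat :=
  \max_(i < size c | nth 0 c i != nth 0 d i) i.+1.

(* f = max{i in 1..l : c_i < d_{i-1}}, with d_0 = +oo *)
Definition fidx (c d : seq nat) : nat :=
  \max_(1 <= i < (ell c d).+1 | (i == 1) || (at_ c i < at_ d i.-1)) i.

(* Main.v *)
Require Import Defs.
From mathcomp Require Import all_boot zify.

Definition anti (s : seq nat) := forall i j, i <= j -> nth 0 s j <= nth 0 s i.

Lemma partP s : is_partition s <-> anti s.
Proof.
split.
- move=> Hs i j Hij.
  case: (ltnP j (size s)) => Hj.
  + have Hi : i < size s by apply: leq_ltn_trans Hj.
    have Htr : transitive geq by move=> y x z /= h1 h2; exact: leq_trans h2 h1.
    have Hrf : reflexive geq by move=> x /=.
    have := @sorted_leq_nth nat geq Htr Hrf 0 s Hs i j.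
    by rewrite !inE => /(_ Hi Hj Hij).
  + by rewrite nth_default.
- move=> H; apply/(sortedP 0) => i _; exact: H.
Qed.

Lemma anti_adj s : (forall i, i.+1 < size s -> nth 0 s i.+1 <= nth 0 s i) -> anti s.
Proof. by move=> H; apply/partP; apply/(sortedP 0). Qed.

Definition cut (a g : seq nat) h :=
  [/\ h <= size a, (forall i, i < h -> nth 0 g i <= nth 0 a i) &
      (forall i, h <= i < size a -> nth 0 a i = nth 0 g i.+1)].

Lemma prec1_max g a : prec1 g a ->
  size g = (size a).+1 /\
  exists h, cut a g h /\ (h < size a -> nth 0 a h < nth 0 g h).
Proof.
case=> Hs /= Ht; split=> //.
set h := find _ _ in Ht.
exists h; split; first split.
- by rewrite /h -{2}(size_iota 0 (size a)) find_size.
- move=> i Hi.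
  have Hia : i < size a by apply: (leq_trans Hi); rewrite /h -{2}(size_iota 0 (size a)) find_size.
  have := before_find 0 Hi; rewrite nth_iota // add0n => /negbT.
  by rewrite -leqNgt.
- exact: Ht.
- move=> Hh.
  have Hhas : has (fun i => nth 0 a i < nth 0 g i) (iota 0 (size a)).
    by rewrite has_find size_iota.
  by have := nth_find 0 Hhas; rewrite -/h nth_iota // add0n.
Qed.

Lemma prec1P g a : prec1 g a <-> size g = (size a).+1 /\ exists h, cut a g h.
Proof.
split.
- by move/prec1_max => [Hs [h [Hc _]]]; split=> //; exists h.
- move=> [Hs [h [Hh Hpre Htl]]]; split=> //=.
  set h0 := find _ _.
  have Hhh : h <= h0.
    rewrite leqNgt; apply/negP => Hlt.
    have Hhas : has (fun i => nth 0 a i < nth 0 g i) (iota 0 (size a)).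
      by rewrite has_find size_iota (leq_trans Hlt Hh).
    have := nth_find 0 Hhas; rewrite -/h0 nth_iota ?add0n; last first.
      by rewrite (leq_trans Hlt Hh).
    by rewrite ltnNge (Hpre _ Hlt).
  move=> i /andP[Hi1 Hi2]; apply: Htl; by rewrite Hi2 (leq_trans Hhh Hi1).
Qed.

Lemma sumn_nth s : sumn s = \sum_(0 <= i < size s) nth 0 s i.
Proof. by rewrite sumnE (big_nth 0). Qed.

Lemma leq_sum_nat a b F G : (forall i, a <= i < b -> F i <= G i) ->
  \sum_(a <= i < b) F i <= \sum_(a <= i < b) G i.
Proof.
move=> H; rewrite big_nat_cond [X in _ <= X]big_nat_cond.
apply: leq_sum => i /andP[Hi _]; exact: H.
Qed.

Lemma sumn_mkseq F n : sumn (mkseq F n) = \sum_(0 <= i < n) F i.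
Proof.
rewrite sumn_nth size_mkseq; apply: eq_big_nat => i /andP[_ Hi].
by rewrite nth_mkseq.
Qed.

Lemma bigmax_arg_seq (r : seq nat) (P : pred nat) F : has P r ->
  exists2 x, (x \in r) && P x & \max_(i <- r | P i) F i = F x.
Proof.
elim: r => //= h t IH; rewrite big_cons.
case Ph: (P h) => /= Hh.
- case Ht: (has P t).
  + have [x /andP[Hx Px] ->] := IH Ht.
    case: (leqP (F h) (F x)) => Hle.
    * exists x; first by rewrite inE Hx orbT Px.
      by rewrite ?(maxn_idPr Hle).
    * exists h; first by rewrite inE eqxx Ph.
      by rewrite ?(maxn_idPl (ltnW Hle)).
  + exists h; first by rewrite inE eqxx Ph.
    by rewrite big_hasC ?Ht // maxn0.
- have [x /andP[Hx Px] ->] := IH Hh.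
  by exists x => //; rewrite inE Hx orbT Px.
Qed.

Lemma ell_nat c d : ell c d = \max_(0 <= i < size c | nth 0 c i != nth 0 d i) i.+1.
Proof. by rewrite /ell big_mkord. Qed.

Lemma ell_facts c d m : size c = m -> size d = m -> c <> d ->
  let L := ell c d in
  [/\ 0 < L, L <= m, nth 0 c L.-1 != nth 0 d L.-1 &
      forall i, L <= i -> nth 0 c i = nth 0 d i].
Proof.
move=> Hc Hd Hne L.
have Hex : has (fun i => nth 0 c i != nth 0 d i) (index_iota 0 m).
  apply/negPn/negP => /hasPn H; apply: Hne.
  apply: (eq_from_nth (x0 := 0)); first by rewrite Hc Hd.
  move=> i Hi; apply/eqP/negPn/negP => Hn.
  by have := H i; rewrite mem_index_iota /= -Hc Hi => /(_ isT); rewrite Hn.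
have HL : L = \max_(i <- index_iota 0 m | nth 0 c i != nth 0 d i) i.+1.
  by rewrite /L ell_nat Hc.
have [x /andP[Hx Px] Hmax] := @bigmax_arg_seq _ _ (fun i => i.+1) Hex.
rewrite mem_index_iota /= in Hx.
have HLx : L = x.+1 by rewrite HL Hmax.
split; rewrite ?HLx //.
move=> i Hi; case: (ltnP i m) => Him.
- apply/eqP/negPn/negP => Hn.
  have := @leq_bigmax_seq nat (index_iota 0 m) (fun i => nth 0 c i != nth 0 d i) (fun i => i.+1) i.
  rewrite mem_index_iota /= Him => /(_ isT Hn).
  by rewrite -HL HLx ltnNge Hi.
- by rewrite !nth_default ?Hc ?Hd.
Qed.

Lemma ell_sym c d m : size c = m -> size d = m -> ell d c = ell c d.
Proof.
move=> Hc Hd; rewrite !ell_nat Hc Hd.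
by apply: eq_bigl => i; rewrite eq_sym.
Qed.

Lemma fidx_facts c d : 0 < ell c d ->
  let L := ell c d in let F := fidx c d in
  [/\ 0 < F, F <= L, (F == 1) || (at_ c F < at_ d F.-1) &
     forall k, F < k <= L -> ~~ (at_ c k < at_ d k.-1)].
Proof.
move=> HL0 L F.
set P := fun i => (i == 1) || (at_ c i < at_ d i.-1).
have HF : F = \max_(i <- index_iota 1 L.+1 | P i) i by [].
have Hex : has P (index_iota 1 L.+1).
  apply/hasP; exists 1; last by rewrite /P eqxx.
  by rewrite mem_index_iota /= ltnS.
have [x /andP[Hx Px] Hmax] := @bigmax_arg_seq _ _ id Hex.
rewrite mem_index_iota ltnS in Hx.
have HFx : F = x by rewrite HF Hmax.
case/andP: (Hx) => Hx1 Hx2.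
rewrite HFx; split => //.
move=> k /andP[Hk1 Hk2]; apply/negP => Hk.
have Pk : P k by rewrite /P Hk orbT.
have := @leq_bigmax_seq nat (index_iota 1 L.+1) P id k.
rewrite mem_index_iota ltnS Hk2 (ltnW (leq_ltn_trans Hx1 Hk1)).
by move=> /(_ isT Pk); rewrite -HF HFx leqNgt Hk1.
Qed.
Set Implicit Arguments.
Unset Strict Implicit.

Definition Hyp (c d : seq nat) (m L p1 p2 : nat) : Prop :=
 [/\ anti c, anti d, size c = m & size d = m] /\
 [/\ [/\ 0 < L, L <= m, nth 0 c L.-1 != nth 0 d L.-1 &
         forall i, L <= i -> nth 0 c i = nth 0 d i],
     [/\ p1 < L, p1 = 0 \/ nth 0 c p1 < nth 0 d p1.-1 &
         forall k, p1 < k < L -> nth 0 d k.-1 <= nth 0 c k] &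
     [/\ p2 < L, p2 = 0 \/ nth 0 d p2 < nth 0 c p2.-1 &
         forall k, p2 < k < L -> nth 0 c k.-1 <= nth 0 d k]].

Lemma Hyp_sym c d m L p1 p2 : Hyp c d m L p1 p2 -> Hyp d c m L p2 p1.
Proof.
case=> [[Hc Hd Hsc Hsd] [[H1 H2 H3 H4] H5 H6]]; split=> //; split=> //.
split=> //; first by rewrite eq_sym.
by move=> i Hi; rewrite H4.
Qed.

Lemma phiL c d m L p1 p2 : Hyp c d m L p1 p2 ->
  nth 0 c L.-1 < nth 0 d L.-1 -> p1 = L.-1.
Proof.
case=> [[Hc Hd _ _] [[HL0 _ _ _] [H1 _ H3] _]] Hlt.
apply/eqP; rewrite eqn_leq; apply/andP; split; first by lia.
rewrite leqNgt; apply/negP => Hp.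
have := H3 L.-1; rewrite Hp /= => /(_ ltac:(lia)) Hle.
have := Hd L.-1.-1 L.-1 (leq_pred _); lia.
Qed.

Lemma maxL_le c d m L p1 p2 : Hyp c d m L p1 p2 ->
  maxn (nth 0 c L.-1) (nth 0 d L.-1) <= maxn (nth 0 c p1) (nth 0 d p2).
Proof.
move=> H; have H' := Hyp_sym H.
case: (H) => [[Hc Hd _ _] [[HL0 _ Hne _] [H1 _ _] [H2 _ _]]].
case: (ltngtP (nth 0 c L.-1) (nth 0 d L.-1)) => Hlt.
- have E := phiL H Hlt.
  have := Hd p2 L.-1 ltac:(lia). lia.
- have E := phiL H' Hlt.
  have := Hc p1 L.-1 ltac:(lia). lia.
- by move: Hne; rewrite Hlt eqxx.
Qed.

Definition smin0 c d m := \sum_(0 <= i < m) minn (nth 0 c i) (nth 0 d i).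
Definition smax0 c d m := \sum_(0 <= i < m) maxn (nth 0 c i) (nth 0 d i).

Lemma smin0C c d m : smin0 c d m = smin0 d c m.
Proof. by apply: eq_big_nat => i _; rewrite minnC. Qed.
Lemma smax0C c d m : smax0 c d m = smax0 d c m.
Proof. by apply: eq_big_nat => i _; rewrite maxnC. Qed.

Lemma sum_split a b n F : a <= b <= n ->
  \sum_(a <= i < n) F i = \sum_(a <= i < b) F i + \sum_(b <= i < n) F i.
Proof. by case/andP=> H1 H2; apply: big_cat_nat. Qed.

Lemma p1_upper_core c d m L p1 p2 g p q : Hyp c d m L p1 p2 ->
  anti g -> size g = m.+1 -> cut c g p -> cut d g q -> p <= q ->
  sumn g <= smin0 c d m + maxn (nth 0 c p1) (nth 0 d p2).
Proof.
move=> H; have HH := H.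
case: H => [[Hc Hd Hsc Hsd] [[HL0 HLm HLne HLeq] [Hf1 Hf2 Hf3] [Hg1 Hg2 Hg3]]].
move=> Hg Hsg [Hp Hpre1 Htl1] [Hq Hpre2 Htl2] Hpq.
rewrite Hsc in Hp Htl1; rewrite Hsd in Hq Htl2.
have Ha : forall i, q <= i -> nth 0 c i = nth 0 d i.
  move=> i Hi; case: (ltnP i m) => Him.
  - rewrite Htl1 ?Htl2 ?Hi ?Him //; apply/andP; split => //; lia.
  - by rewrite !nth_default ?Hsc ?Hsd.
have HLq : L <= q.
  rewrite leqNgt; apply/negP => Hlt.
  by move: HLne; rewrite Ha ?eqxx //; lia.
have Hcd : forall i, p <= i -> nth 0 c i <= nth 0 d i.
  move=> i Hi; case: (leqP q i) => Hqi; first by rewrite Ha.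
  rewrite Htl1; last by apply/andP; split => //; lia.
  exact: leq_trans (Hg _ _ (leqnSn i)) (Hpre2 _ Hqi).
have Hgp : nth 0 g p <= maxn (nth 0 c p1) (nth 0 d p2).
  case: (ltnP p q) => Hpq'.
  - have Hp2 : p2 <= p.
      rewrite leqNgt; apply/negP => Hlt.
      case: Hg2 => H0; first by lia.
      have E1 : nth 0 c p2.-1 = nth 0 g p2.
        rewrite Htl1; last by apply/andP; split; lia.
        by rewrite prednK //; lia.
      have := Hpre2 p2 ltac:(lia). lia.
    have := Hpre2 p Hpq'; have := Hd p2 p Hp2; lia.
  - have Epq : p = q by lia.
    have Hp0 : 0 < p by lia.
    have := Hg p.-1 p (leq_pred _).
    have := Hpre1 p.-1 ltac:(lia); have := Hpre2 p.-1 ltac:(lia).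
    have := Hc L.-1 p.-1 ltac:(lia); have := Hd L.-1 p.-1 ltac:(lia).
    have := maxL_le HH. lia.
rewrite sumn_nth Hsg /smin0 (@sum_split 0 p m.+1) ?leq0n; last by lia.
rewrite (@sum_split 0 p m) ?leq0n; last by lia.
rewrite [\sum_(p <= i < m.+1) _]big_ltn; last by lia.
rewrite big_add1 /=.
have E1 : \sum_(p <= i < m) nth 0 g i.+1 = \sum_(p <= i < m) minn (nth 0 c i) (nth 0 d i).
  apply: eq_big_nat => i Hi; rewrite -Htl1 //.
  by apply/esym/minn_idPl/Hcd; case/andP: Hi.
have E2 : \sum_(0 <= i < p) nth 0 g i <= \sum_(0 <= i < p) minn (nth 0 c i) (nth 0 d i).
  apply: leq_sum_nat => i /andP[_ Hi]; rewrite leq_min Hpre1 //=.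
  apply: Hpre2; lia.
rewrite E1; lia.
Qed.

Lemma p1_lower_core c d m L p1 p2 : Hyp c d m L p1 p2 ->
  nth 0 c p1 <= nth 0 d p2 ->
  exists g, [/\ anti g, size g = m.+1,
     sumn g = smin0 c d m + maxn (nth 0 c p1) (nth 0 d p2), cut c g p2 & cut d g L].
Proof.
move=> H; have HH := H.
case: H => [[Hc Hd Hsc Hsd] [[HL0 HLm HLne HLeq] [Hf1 Hf2 Hf3] [Hg1 Hg2 Hg3]]] Hle.
have Hcd : forall i, p2 <= i -> nth 0 c i <= nth 0 d i.
  move=> i Hi; case: (leqP L i) => HiL; first by rewrite HLeq.
  case: (ltngtP p2 i) => Hpi.
  - have := Hg3 i ltac:(lia); have := Hc i.-1 i (leq_pred _); lia.
  - lia.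
  - subst i; case: (ltnP p2.+1 L) => HpL.
    + have := Hg3 p2.+1 ltac:(lia); have := Hd p2 p2.+1 (leqnSn _); simpl; lia.
    + have Ep : p2 = L.-1 by lia.
      rewrite leqNgt; apply/negP => Hlt.
      have := Hc p1 L.-1 ltac:(lia); rewrite -Ep; lia.
pose G i := if i < p2 then minn (nth 0 c i) (nth 0 d i)
            else if i == p2 then nth 0 d p2 else nth 0 c i.-1.
have G_lt : forall i, i < p2 -> G i = minn (nth 0 c i) (nth 0 d i).
  by move=> i Hi; rewrite /G Hi.
have G_eq : G p2 = nth 0 d p2 by rewrite /G ltnn eqxx.
have G_gt : forall i, p2 < i -> G i = nth 0 c i.-1.
  by move=> i Hi; rewrite /G ltnNge (ltnW Hi) /= gtn_eqF.
exists (mkseq G m.+1); split.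
- apply: anti_adj => i; rewrite size_mkseq => Hi.
  rewrite !nth_mkseq //; last by lia.
  case: (ltngtP i.+1 p2) => H1.
  + rewrite !G_lt //; last by lia.
    have := Hc i i.+1 (leqnSn _); have := Hd i i.+1 (leqnSn _); lia.
  + rewrite G_gt // /=.
    case: (ltngtP i p2) => H2; first by lia.
    * rewrite G_gt //; have := Hc i.-1 i (leq_pred _); lia.
    * by subst i; rewrite G_eq; apply: Hcd.
  + rewrite H1 G_eq G_lt; last by lia.
    case: Hg2 => Hg2; first by lia.
    have := Hd i p2 ltac:(lia); rewrite -H1 /= in Hg2 *; lia.
- by rewrite size_mkseq.
- rewrite sumn_mkseq /smin0 (@sum_split 0 p2 m.+1) ?leq0n; last by lia.
  rewrite (@sum_split 0 p2 m) ?leq0n; last by lia.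
  rewrite [\sum_(p2 <= i < m.+1) _]big_ltn; last by lia.
  rewrite big_add1 /= G_eq.
  have E1 : \sum_(p2 <= i < m) G i.+1 = \sum_(p2 <= i < m) minn (nth 0 c i) (nth 0 d i).
    apply: eq_big_nat => i /andP[Hi1 Hi2]; rewrite G_gt /=; last by lia.
    by apply/esym/minn_idPl/Hcd.
  have E2 : \sum_(0 <= i < p2) G i = \sum_(0 <= i < p2) minn (nth 0 c i) (nth 0 d i).
    by apply: eq_big_nat => i /andP[_ Hi]; rewrite G_lt.
  rewrite E1 E2; lia.
- split; first by rewrite Hsc; lia.
  + move=> i Hi; rewrite nth_mkseq; last by lia.
    rewrite G_lt //; lia.
  + move=> i; rewrite Hsc => /andP[Hi1 Hi2].
    by rewrite nth_mkseq ?G_gt //; lia.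
- split; first by rewrite Hsd.
  + move=> i Hi; rewrite nth_mkseq; last by lia.
    case: (ltngtP i p2) => H1.
    * rewrite G_lt //; lia.
    * rewrite G_gt //; apply: Hg3; lia.
    * by subst i; rewrite G_eq.
  + move=> i; rewrite Hsd => /andP[Hi1 Hi2].
    rewrite nth_mkseq ?G_gt /=; try lia.
    by rewrite HLeq.
Qed.

Lemma cut_lower a g g' h k : cut a g h ->
  (forall i, nth 0 g' i <= nth 0 g i) -> (forall i, k < i -> nth 0 g' i = nth 0 g i) ->
  k <= h -> cut a g' h.
Proof.
move=> [Hh Hpre Htl] Hle Heq Hkh; split=> //.
- by move=> i Hi; apply: leq_trans (Hle i) (Hpre i Hi).
- move=> i /andP[Hi1 Hi2]; rewrite Heq; last by lia.
  by apply: Htl; rewrite Hi1 Hi2.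
Qed.

Lemma sumn_set_pred s j : j < size s -> 0 < nth 0 s j ->
  sumn (set_nth 0 s j (nth 0 s j).-1) + 1 = sumn s.
Proof.
elim: s j => [|x t IH] [|j] //=.
- by move=> _ Hx; lia.
- by move=> Hj Hx; rewrite -addnA IH.
Qed.

Lemma sumn_pos s : 0 < sumn s -> exists2 i, i < size s & 0 < nth 0 s i.
Proof.
elim: s => [|x t IH] //= Hs.
case: (posnP x) => Hx.
- have [i Hi1 Hi2] := IH ltac:(lia).
  by exists i.+1.
- by exists 0.
Qed.

Lemma nth_setE s j y i : nth 0 (set_nth 0 s j y) i = if i == j then y else nth 0 s i.
Proof. by rewrite nth_set_nth. Qed.

Lemma dec_core a b m g p q : size a = m -> size b = m -> anti g -> size g = m.+1 ->
  cut a g p -> (p < m -> nth 0 a p < nth 0 g p) -> cut b g q -> p <= q ->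
  0 < sumn g ->
  exists g', [/\ anti g', size g' = m.+1, sumn g' + 1 = sumn g, cut a g' p & cut b g' q].
Proof.
move=> Ha Hb Hg Hsg Hca Hmax Hcb Hpq Hpos.
have Hca' := Hca; have Hcb' := Hcb.
case: Hca' => [Hp Hpre1 Htl1]; case: Hcb' => [Hq _ _].
rewrite Ha in Hp Htl1; rewrite Hb in Hq.
have [j [Hj Hgj Hjp Hnext]] : exists j, [/\ j < m.+1, 0 < nth 0 g j, j <= p &
      nth 0 g j.+1 < nth 0 g j].
  case: (ltnP p m) => Hpm.
  - have := Hmax Hpm; have := Htl1 p ltac:(lia) => E; rewrite E => Hlt.
    by exists p; split => //; lia.
  - have [i Hi1 Hi2] := sumn_pos Hpos.
    have exP : exists i, (i < m.+1) && (0 < nth 0 g i).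
      by exists i; rewrite -Hsg Hi1 Hi2.
    have ubP : forall i, (i < m.+1) && (0 < nth 0 g i) -> i <= m.
      by move=> i' /andP[H1 _].
    case: (ex_maxnP exP ubP) => j /andP[Hj1 Hj2] Hjmax.
    exists j; split => //; first by lia.
    case: (ltnP j.+1 m.+1) => Hj3.
    + rewrite ltnNge; apply/negP => Hle.
      have := Hjmax j.+1; rewrite Hj3 /= => /(_ ltac:(lia)); lia.
    + by rewrite nth_default ?Hsg.
exists (set_nth 0 g j (nth 0 g j).-1); split.
- apply: anti_adj => i; rewrite size_set_nth Hsg => Hi.
  rewrite !nth_setE.
  case: (eqVneq i.+1 j) => H1.
  + rewrite -H1 (ltn_eqF (ltnSn i)); have := Hg i i.+1 (leqnSn _); lia.
  + case: (eqVneq i j) => H2.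
    * subst i; lia.
    * exact: Hg.
- rewrite size_set_nth Hsg; lia.
- apply: sumn_set_pred => //; lia.
- apply: (cut_lower Hca (k := j)) => //.
  + by move=> i; rewrite nth_setE; case: eqP => // ->; apply: leq_pred.
  + by move=> i Hi; rewrite nth_setE gtn_eqF.
- apply: (cut_lower Hcb (k := j)); last by lia.
  + by move=> i; rewrite nth_setE; case: eqP => // ->; apply: leq_pred.
  + by move=> i Hi; rewrite nth_setE gtn_eqF.
Qed.

Lemma dec_step c d m g : size c = m -> size d = m -> anti g -> size g = m.+1 ->
  prec1 g c -> prec1 g d -> 0 < sumn g ->
  exists g', [/\ anti g', size g' = m.+1, sumn g' + 1 = sumn g, prec1 g' c & prec1 g' d].
Proof.
move=> Hc Hd Hg Hsg /prec1_max [Hs1 [p [Hcp Hmp]]] /prec1_max [Hs2 [q [Hcq Hmq]]] Hpos.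
rewrite Hc in Hmp; rewrite Hd in Hmq.
case: (leqP p q) => Hpq.
- have [g' [H1 H2 H3 H4 H5]] := dec_core Hc Hd Hg Hsg Hcp Hmp Hcq Hpq Hpos.
  exists g'; split => //; apply/prec1P; split; rewrite ?Hc ?Hd //; by [exists p | exists q].
- have [g' [H1 H2 H3 H4 H5]] := dec_core Hd Hc Hg Hsg Hcq Hmq Hcp (ltnW Hpq) Hpos.
  exists g'; split => //; apply/prec1P; split; rewrite ?Hc ?Hd //; by [exists p | exists q].
Qed.

Lemma dec_all c d m g : size c = m -> size d = m -> anti g -> size g = m.+1 ->
  prec1 g c -> prec1 g d -> forall S, S <= sumn g ->
  exists g', [/\ anti g', size g' = m.+1, sumn g' = S, prec1 g' c & prec1 g' d].
Proof.
move=> Hc Hd Hg Hsg Hpc Hpd S HS.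
have [k Hk] : exists k, sumn g = S + k by exists (sumn g - S); lia.
elim: k g Hg Hsg Hpc Hpd HS Hk => [|k IH] g Hg Hsg Hpc Hpd HS Hk.
- by exists g; split => //; lia.
- have [g' [H1 H2 H3 H4 H5]] := dec_step Hc Hd Hg Hsg Hpc Hpd ltac:(lia).
  apply: (IH g') => //; lia.
Qed.

Lemma part1 c d m L p1 p2 S : Hyp c d m L p1 p2 ->
  ((exists g : seq nat, [/\ is_partition g, size g = m.+1, sumn g = S,
       prec1 g c & prec1 g d]) <-> S <= smin0 c d m + maxn (nth 0 c p1) (nth 0 d p2)).
Proof.
move=> H; have H' := Hyp_sym H; have HH := H.
case: HH => [[Hc Hd Hsc Hsd] _].
split.
- move=> [g [/partP Hg Hsg <- /prec1P [_ [p Hp]] /prec1P [_ [q Hq]]]].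
  case: (leqP p q) => Hpq.
  + exact: p1_upper_core H Hg Hsg Hp Hq Hpq.
  + by rewrite smin0C maxnC; apply: (p1_upper_core H' Hg Hsg Hq Hp); lia.
- move=> HS.
  case: (leqP (nth 0 c p1) (nth 0 d p2)) => Hle.
  + have [g [Hg Hsg Hsum Hcg Hdg]] := p1_lower_core H Hle.
    have Hpc : prec1 g c by apply/prec1P; split; [rewrite Hsc | exists p2].
    have Hpd : prec1 g d by apply/prec1P; split; [rewrite Hsd | exists L].
    have [g' [H1 H2 H3 H4 H5]] := dec_all Hsc Hsd Hg Hsg Hpc Hpd (S := S) ltac:(lia).
    by exists g'; split => //; apply/partP.
  + have [g [Hg Hsg Hsum Hcg Hdg]] := p1_lower_core H' (ltnW Hle).
    have Hpc : prec1 g c by apply/prec1P; split; [rewrite Hsc | exists L].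
    have Hpd : prec1 g d by apply/prec1P; split; [rewrite Hsd | exists p1].
    rewrite smin0C maxnC in Hsum.
    have [g' [H1 H2 H3 H4 H5]] := dec_all Hsc Hsd Hg Hsg Hpc Hpd (S := S) ltac:(lia).
    by exists g'; split => //; apply/partP.
Qed.

Lemma p2_lower_core c d m L p1 p2 e p q : Hyp c d m L p1 p2 ->
  size e = m.-1 -> cut e c p -> cut e d q -> p <= q ->
  smax0 c d m <= sumn e + maxn (nth 0 c p1) (nth 0 d p2).
Proof.
move=> H; have HH := H.
case: H => [[Hc Hd Hsc Hsd] [[HL0 HLm HLne HLeq] [Hf1 Hf2 Hf3] [Hg1 Hg2 Hg3]]].
move=> Hse [Hp Hpre1 Htl1] [Hq Hpre2 Htl2] Hpq.
rewrite Hse in Hp Hq Htl1 Htl2.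
have Ha : forall j, q < j -> nth 0 c j = nth 0 d j.
  move=> j Hj; case: (ltnP j m) => Hjm.
  - have E1 := Htl1 j.-1 ltac:(lia); have E2 := Htl2 j.-1 ltac:(lia).
    rewrite prednK in E1 E2; lia.
  - by rewrite !nth_default ?Hsc ?Hsd.
have HLq : L <= q.+1.
  rewrite leqNgt; apply/negP => Hlt.
  by move: HLne; rewrite Ha ?eqxx //; lia.
have Hdc : forall j, p < j -> nth 0 d j <= nth 0 c j.
  move=> j Hj; case: (ltnP q j) => Hqj; first by rewrite Ha.
  have E1 := Htl1 j.-1 ltac:(lia); rewrite prednK in E1; last by lia.
  have := Hpre2 j.-1 ltac:(lia); have := Hd j.-1 j (leq_pred _); lia.
have Hmx : maxn (nth 0 c p) (nth 0 d p) <= maxn (nth 0 c p1) (nth 0 d p2).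
  case: (ltnP p q) => Hpq'.
  - have Hp1 : p1 <= p.
      rewrite leqNgt; apply/negP => Hlt.
      case: Hf2 => H0; first by lia.
      have E1 := Htl1 p1.-1 ltac:(lia); rewrite prednK in E1; last by lia.
      have := Hpre2 p1.-1 ltac:(lia); lia.
    have := Hc p1 p Hp1; have := Hpre2 p Hpq'; have := Htl1 p ltac:(lia).
    have := Hc p p.+1 (leqnSn _); lia.
  - have := Hc L.-1 p ltac:(lia); have := Hd L.-1 p ltac:(lia).
    have := maxL_le HH; lia.
have Hm : m = m.-1.+1 by lia.
rewrite sumn_nth Hse /smax0 (@sum_split 0 p m) ?leq0n; last by lia.
rewrite (@sum_split 0 p m.-1) ?leq0n; last by lia.
rewrite [\sum_(p <= i < m) _]big_ltn; last by lia.
rewrite big_add1 /=.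
have E1 : \sum_(p <= i < m.-1) nth 0 e i = \sum_(p <= i < m.-1) maxn (nth 0 c i.+1) (nth 0 d i.+1).
  apply: eq_big_nat => i Hi; rewrite Htl1 //.
  by apply/esym/maxn_idPl/Hdc; case/andP: Hi; lia.
have E2 : \sum_(0 <= i < p) maxn (nth 0 c i) (nth 0 d i) <= \sum_(0 <= i < p) nth 0 e i.
  apply: leq_sum_nat => i /andP[_ Hi]; rewrite geq_max Hpre1 //=.
  apply: Hpre2; lia.
rewrite E1; lia.
Qed.

Lemma sum_delta0 n k : 0 < n -> \sum_(0 <= i < n) (if i == 0 then k else 0) = k.
Proof.
move=> Hn; rewrite big_ltn //=.
rewrite big_nat_cond big1 ?addn0 // => i /andP[/andP[Hi _] _].
by case: i Hi.
Qed.

Lemma p2_upper_core c d m L p1 p2 k : Hyp c d m L p1 p2 -> 0 < p1 ->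
  nth 0 d p2 <= nth 0 c p1 ->
  exists e, [/\ anti e, size e = m.-1,
     sumn e + maxn (nth 0 c p1) (nth 0 d p2) = smax0 c d m + k,
     cut e c p1 & cut e d L.-1].
Proof.
move=> H; have HH := H.
case: H => [[Hc Hd Hsc Hsd] [[HL0 HLm HLne HLeq] [Hf1 Hf2 Hf3] [Hg1 Hg2 Hg3]]] Hp0 Hle.
have Hdc : forall j, p1 <= j -> nth 0 d j <= nth 0 c j.
  move=> j Hj; case: (leqP L j) => HjL; first by rewrite HLeq.
  case: (ltngtP p1 j) => Hpj.
  - have := Hf3 j ltac:(lia); have := Hd j.-1 j (leq_pred _); lia.
  - lia.
  - subst j; case: (ltnP p1.+1 L) => HpL.
    + have := Hf3 p1.+1 ltac:(lia); have := Hc p1 p1.+1 (leqnSn _); simpl; lia.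
    + have := Hd p2 p1 ltac:(lia); lia.
pose B i := if i < p1 then maxn (nth 0 c i) (nth 0 d i) else nth 0 c i.+1.
have B_lt : forall i, i < p1 -> B i = maxn (nth 0 c i) (nth 0 d i).
  by move=> i Hi; rewrite /B Hi.
have B_ge : forall i, p1 <= i -> B i = nth 0 c i.+1.
  by move=> i Hi; rewrite /B ltnNge Hi.
pose Gf i := B i + (if i == 0 then k else 0).
have Gn0 : forall i, 0 < i -> Gf i = B i.
  by move=> [|i] // _; rewrite /Gf /= addn0.
exists (mkseq Gf m.-1); split.
- apply: anti_adj => i; rewrite size_mkseq => Hi.
  rewrite !nth_mkseq //; last by lia.
  rewrite Gn0 //.
  have HB : B i <= Gf i by rewrite /Gf leq_addr.
  apply: leq_trans HB.
  case: (ltngtP i.+1 p1) => H1.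
  + rewrite !B_lt //; last by lia.
    have := Hc i i.+1 (leqnSn _); have := Hd i i.+1 (leqnSn _); lia.
  + rewrite !B_ge //; last by lia.
    exact: Hc.
  + rewrite B_ge ?H1 // B_lt; last by lia.
    have := Hc i p1.+1 ltac:(lia); lia.
- by rewrite size_mkseq.
- rewrite sumn_mkseq /Gf big_split /= sum_delta0; last by lia.
  rewrite /smax0 (@sum_split 0 p1 m.-1) ?leq0n; last by lia.
  rewrite (@sum_split 0 p1 m) ?leq0n; last by lia.
  rewrite [\sum_(p1 <= i < m) _]big_ltn; last by lia.
  rewrite big_add1 /=.
  have E1 : \sum_(p1 <= i < m.-1) B i = \sum_(p1 <= i < m.-1) maxn (nth 0 c i.+1) (nth 0 d i.+1).
    apply: eq_big_nat => i /andP[Hi1 Hi2]; rewrite B_ge //.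
    by apply/esym/maxn_idPl/Hdc; lia.
  have E2 : \sum_(0 <= i < p1) B i = \sum_(0 <= i < p1) maxn (nth 0 c i) (nth 0 d i).
    by apply: eq_big_nat => i /andP[_ Hi]; rewrite B_lt.
  rewrite E1 E2 (maxn_idPl Hle) (maxn_idPl (Hdc p1 (leqnn _))); lia.
- split; first by rewrite size_mkseq; lia.
  + move=> i Hi; rewrite nth_mkseq; last by lia.
    rewrite /Gf B_lt //; lia.
  + move=> i; rewrite size_mkseq => /andP[Hi1 Hi2].
    by rewrite nth_mkseq // Gn0 ?B_ge //; lia.
- split; first by rewrite size_mkseq; lia.
  + move=> i Hi; rewrite nth_mkseq; last by lia.
    case: (ltnP i p1) => H1.
    * rewrite /Gf B_lt //; lia.
    * rewrite Gn0 ?B_ge //; last by lia.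
      have := Hf3 i.+1 ltac:(lia); simpl; lia.
  + move=> i; rewrite size_mkseq => /andP[Hi1 Hi2].
    rewrite nth_mkseq // Gn0 ?B_ge; try lia.
    by rewrite HLeq //; lia.
Qed.

Lemma part2 c d m L p1 p2 E : Hyp c d m L p1 p2 -> 0 < p1 -> 0 < p2 ->
  ((exists e : seq nat, [/\ is_partition e, size e = m.-1, sumn e = E,
        prec1 c e & prec1 d e]) <-> smax0 c d m <= E + maxn (nth 0 c p1) (nth 0 d p2)).
Proof.
move=> H Hp1 Hp2; have H' := Hyp_sym H; have HH := H.
case: HH => [[Hc Hd Hsc Hsd] [[HL0 HLm _ _] _ _]].
split.
- move=> [e [/partP He Hse <- /prec1P [_ [p Hp]] /prec1P [_ [q Hq]]]].
  case: (leqP p q) => Hpq.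
  + exact: p2_lower_core H Hse Hp Hq Hpq.
  + by rewrite smax0C maxnC; apply: (p2_lower_core H' Hse Hq Hp); lia.
- move=> HE.
  case: (leqP (nth 0 d p2) (nth 0 c p1)) => Hle.
  + have [e [He Hse Hsum Hce Hde]] :=
      p2_upper_core (E + maxn (nth 0 c p1) (nth 0 d p2) - smax0 c d m) H Hp1 Hle.
    exists e; split => //; first exact/partP.
    * lia.
    * by apply/prec1P; split; [rewrite Hsc Hse; lia | exists p1].
    * by apply/prec1P; split; [rewrite Hsd Hse; lia | exists L.-1].
  + have [e [He Hse Hsum Hce Hde]] :=
      p2_upper_core (E + maxn (nth 0 c p1) (nth 0 d p2) - smax0 c d m) H' Hp2 (ltnW Hle).
    rewrite maxnC smax0C in Hsum.
    exists e; split => //; first exact/partP.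
    * lia.
    * by apply/prec1P; split; [rewrite Hsc Hse; lia | exists L.-1].
    * by apply/prec1P; split; [rewrite Hsd Hse; lia | exists p2].
Qed.

Lemma tail_ge a e p : anti a -> cut e a p ->
  forall i, i < size e -> nth 0 a i.+1 <= nth 0 e i.
Proof.
move=> Ha [Hp Hpre Htl] i Hi; case: (ltnP i p) => H1.
- exact: leq_trans (Ha _ _ (leqnSn i)) (Hpre _ H1).
- by rewrite Htl ?H1.
Qed.

Lemma p3_nec_core c d m e q : anti c -> anti d -> size e = m.-1 ->
  cut e c 0 -> cut e d q ->
  sumn e = \sum_(1 <= i < m) maxn (nth 0 c i) (nth 0 d i).
Proof.
move=> Hc Hd Hse Hce Hde.
have [_ _ Htl] := Hce.
rewrite sumn_nth Hse big_add1 /=.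
apply: eq_big_nat => i /andP[_ Hi].
rewrite Htl ?Hse //; symmetry; apply/maxn_idPl.
have := tail_ge Hd Hde (i := i); rewrite Hse Htl ?Hse //=.
by apply.
Qed.

Lemma p3_nec c d m e p q : anti c -> anti d -> 1 < m -> size e = m.-1 ->
  cut e c p -> cut e d q ->
  sumn e = \sum_(1 <= i < m) maxn (nth 0 c i) (nth 0 d i) \/
  maxn (nth 0 c 0) (nth 0 d 0) + \sum_(2 <= i < m) maxn (nth 0 c i) (nth 0 d i) <= sumn e.
Proof.
move=> Hc Hd Hm Hse Hce Hde.
case: (posnP p) => Hp.
  by left; subst p; apply: p3_nec_core Hc Hd Hse Hce Hde.
case: (posnP q) => Hq.
  left; subst q; rewrite (p3_nec_core Hd Hc Hse Hde Hce).
  by apply: eq_big_nat => i _; rewrite maxnC.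
right.
have [_ Hpre1 _] := Hce; have [_ Hpre2 _] := Hde.
rewrite sumn_nth Hse [\sum_(0 <= i < m.-1) _]big_ltn; last by lia.
rewrite big_add1 /=.
have := Hpre1 0 Hp; have := Hpre2 0 Hq.
have : \sum_(1 <= i < m.-1) maxn (nth 0 c i.+1) (nth 0 d i.+1) <= \sum_(1 <= i < m.-1) nth 0 e i.
  apply: leq_sum_nat => i /andP[_ Hi]; rewrite geq_max.
  by rewrite (tail_ge Hc Hce) ?(tail_ge Hd Hde) ?Hse.
lia.
Qed.

Lemma p3_suff c d m L p1 p2 : Hyp c d m L p1 p2 -> p1 = 0 -> 1 < m ->
  (exists e, [/\ anti e, size e = m.-1,
     sumn e = \sum_(1 <= i < m) maxn (nth 0 c i) (nth 0 d i), cut e c 0 & cut e d L.-1]) /\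
  (forall k, exists e, [/\ anti e, size e = m.-1,
     sumn e = maxn (nth 0 c 0) (nth 0 d 0) + \sum_(2 <= i < m) maxn (nth 0 c i) (nth 0 d i) + k,
     cut e c 1 & cut e d (maxn L.-1 1)]).
Proof.
move=> H Hp10 Hm; have HH := H.
case: H => [[Hc Hd Hsc Hsd] [[HL0 HLm HLne HLeq] [Hf1 Hf2 Hf3] [Hg1 Hg2 Hg3]]].
subst p1.
have Hdc : forall j, 0 < j -> nth 0 d j <= nth 0 c j.
  move=> j Hj; case: (leqP L j) => HjL; first by rewrite HLeq.
  have := Hf3 j ltac:(lia); have := Hd j.-1 j (leq_pred _); lia.
have Hdc1 : forall i, i.+1 < L -> nth 0 d i <= nth 0 c i.+1.
  by move=> i Hi; have := Hf3 i.+1 ltac:(lia).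
split.
- exists (mkseq (fun i => nth 0 c i.+1) m.-1); split.
  + apply: anti_adj => i; rewrite size_mkseq => Hi.
    rewrite !nth_mkseq //; last by lia.
    exact: Hc.
  + by rewrite size_mkseq.
  + rewrite sumn_mkseq big_add1 /=; apply: eq_big_nat => i _.
    by symmetry; apply/maxn_idPl/Hdc.
  + split; first by rewrite size_mkseq.
    * by [].
    * by move=> i; rewrite size_mkseq => /andP[_ Hi]; rewrite nth_mkseq.
  + split; first by rewrite size_mkseq; lia.
    * move=> i Hi; rewrite nth_mkseq; last by lia.
      apply: Hdc1; lia.
    * move=> i; rewrite size_mkseq => /andP[Hi1 Hi2]; rewrite nth_mkseq //.
      by rewrite HLeq //; lia.
- move=> k.
  pose X := maxn (nth 0 c 0) (nth 0 d 0).
  pose Gf i := if i == 0 then X + k else nth 0 c i.+1.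
  exists (mkseq Gf m.-1); split.
  + apply: anti_adj => i; rewrite size_mkseq => Hi.
    rewrite !nth_mkseq //; last by lia.
    rewrite /Gf /=; case: (eqVneq i 0) => Hi0.
    * subst i; have := Hc 0 2 isT; rewrite /X; lia.
    * exact: Hc.
  + by rewrite size_mkseq.
  + rewrite sumn_mkseq big_ltn; last by lia.
    rewrite [\sum_(2 <= i < m) _]big_add1 /=.
    have -> : \sum_(1 <= i < m.-1) Gf i = \sum_(1 <= i < m.-1) maxn (nth 0 c i.+1) (nth 0 d i.+1).
      apply: eq_big_nat => i /andP[Hi _]; rewrite /Gf.
      case: i Hi => // i _ /=.
      by symmetry; apply/maxn_idPl/Hdc.
    rewrite /Gf /=; lia.
  + split; first by rewrite size_mkseq; lia.
    * move=> i Hi; rewrite nth_mkseq; last by lia.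
      have -> : i = 0 by lia.
      rewrite /Gf /X /=; lia.
    * move=> i; rewrite size_mkseq => /andP[Hi1 Hi2]; rewrite nth_mkseq //.
      by rewrite /Gf; case: i Hi1 Hi2.
  + split; first by rewrite size_mkseq; lia.
    * move=> i Hi; rewrite nth_mkseq; last by lia.
      rewrite /Gf; case: (eqVneq i 0) => Hi0.
      -- subst i; rewrite /X; lia.
      -- apply: Hdc1; lia.
    * move=> i; rewrite size_mkseq => /andP[Hi1 Hi2]; rewrite nth_mkseq //.
      rewrite /Gf; case: (eqVneq i 0) => Hi0; first by lia.
      by rewrite HLeq //; lia.
Qed.

Lemma p3_suff2 c d m L p1 p2 E : Hyp c d m L p1 p2 -> p1 = 0 -> 1 < m ->
   (E = \sum_(1 <= i < m) maxn (nth 0 c i) (nth 0 d i) \/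
    maxn (nth 0 c 0) (nth 0 d 0) + \sum_(2 <= i < m) maxn (nth 0 c i) (nth 0 d i) <= E) ->
  exists e : seq nat, [/\ is_partition e, size e = m.-1, sumn e = E,
        prec1 c e & prec1 d e].
Proof.
move=> H Hp Hm HE; have HH := H.
case: HH => [[Hc Hd Hsc Hsd] _].
have [Ha Hb] := p3_suff H Hp Hm.
case: HE => HE.
- have [e [He Hse Hs Hce Hde]] := Ha.
  exists e; split => //; first exact/partP.
  + by rewrite Hs.
  + by apply/prec1P; split; [rewrite Hsc Hse; lia | exists 0].
  + by apply/prec1P; split; [rewrite Hsd Hse; lia | exists L.-1].
- have [e [He Hse Hs Hce Hde]] := Hb (E - (maxn (nth 0 c 0) (nth 0 d 0) +
       \sum_(2 <= i < m) maxn (nth 0 c i) (nth 0 d i))).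
  exists e; split => //; first exact/partP.
  + lia.
  + by apply/prec1P; split; [rewrite Hsc Hse; lia | exists 1].
  + by apply/prec1P; split; [rewrite Hsd Hse; lia | exists (maxn L.-1 1)].
Qed.

Lemma part3b c d m L p1 p2 E : Hyp c d m L p1 p2 -> p1 = 0 \/ p2 = 0 -> 1 < m ->
  ((exists e : seq nat, [/\ is_partition e, size e = m.-1, sumn e = E,
        prec1 c e & prec1 d e]) <->
   (E = \sum_(1 <= i < m) maxn (nth 0 c i) (nth 0 d i) \/
    maxn (nth 0 c 0) (nth 0 d 0) + \sum_(2 <= i < m) maxn (nth 0 c i) (nth 0 d i) <= E)).
Proof.
move=> H Hp Hm; have H' := Hyp_sym H; have HH := H.
case: HH => [[Hc Hd Hsc Hsd] _].
split.
- move=> [e [_ Hse <- /prec1P [_ [p Hp']] /prec1P [_ [q Hq]]]].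
  exact: p3_nec Hc Hd Hm Hse Hp' Hq.
- move=> HE; case: Hp => Hp.
  + exact: p3_suff2 H Hp Hm HE.
  + have Hsym : forall a, \sum_(a <= i < m) maxn (nth 0 d i) (nth 0 c i) =
                          \sum_(a <= i < m) maxn (nth 0 c i) (nth 0 d i).
      by move=> a; apply: eq_big_nat => i _; rewrite maxnC.
    have [e [He1 He2 He3 He4 He5]] : exists e : seq nat, [/\ is_partition e, size e = m.-1, sumn e = E,
        prec1 d e & prec1 c e].
      by apply: (p3_suff2 H' Hp Hm); rewrite !Hsym maxnC.
    by exists e.
Qed.

Lemma p3_consts c d m L p1 p2 : Hyp c d m L p1 p2 -> p1 = 0 -> 1 < m ->
  maxn (nth 0 c p1) (nth 0 d p2) = maxn (nth 0 c 0) (nth 0 d 0) /\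
  omaxn (xat c p1.+2) (xat d p2.+2) = Some (maxn (nth 0 c 1) (nth 0 d 1)).
Proof.
case=> [[Hc Hd Hsc Hsd] [[HL0 HLm HLne HLeq] [Hf1 Hf2 Hf3] [Hg1 Hg2 Hg3]]] Hp Hm.
subst p1.
have Hd1 : nth 0 d 1 <= nth 0 c 1.
  case: (ltnP 1 L) => HL.
  - have := Hf3 1 ltac:(lia); have := Hd 0 1 isT; simpl; lia.
  - by rewrite HLeq.
split.
- case: (posnP p2) => Hp2; first by subst p2.
  have := Hf3 1 ltac:(lia); have := Hd 0 p2 (leq0n _); have := Hc 0 1 isT; simpl; lia.
- rewrite /xat /= Hsc Hm Hsd.
  have := Hd 1 p2.+1 ltac:(lia).
  case: ifP => _ /=; rewrite (maxn_idPl Hd1) => H1.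
  + by rewrite (maxn_idPl (leq_trans H1 Hd1)).
  + by [].
Qed.

Lemma omaxnC x y : omaxn x y = omaxn y x.
Proof. by case: x => [a|]; case: y => [b|] //=; rewrite maxnC. Qed.
Unset Implicit Arguments.
Set Strict Implicit.

Theorem lemma5p3 (m S E : nat) (c d : seq nat) :
  is_partition c -> is_partition d -> size c = m -> size d = m -> c <> d ->
  let f := fidx c d in
  let f' := fidx d c in
  let M := maxn (at_ c f) (at_ d f') in
  let smin := \sum_(1 <= i < m.+1) minn (at_ c i) (at_ d i) in
  let smax := \sum_(1 <= i < m.+1) maxn (at_ c i) (at_ d i) in
  (* part 1 *)
  ((exists g : seq nat, [/\ is_partition g, size g = m.+1, sumn g = S,
       prec1 g c & prec1 g d]) <-> S <= smin + M)
  /\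
  (* part 2 *)
  (1 < f -> 1 < f' ->
   ((exists e : seq nat, [/\ is_partition e, size e = m.-1, sumn e = E,
        prec1 c e & prec1 d e]) <-> smax <= E + M))
  /\
  (* part 3 *)
  (f = 1 \/ f' = 1 ->
   ((exists e : seq nat, [/\ is_partition e, size e = m.-1, sumn e = E,
        prec1 c e & prec1 d e]) <->
     (E + M = smax \/
      match omaxn (xat c f.+1) (xat d f'.+1) with
      | Some M2 => smax <= E + M2
      | None => False (* E >= +oo *)
      end))
   /\
   (1 < m ->
    ((exists e : seq nat, [/\ is_partition e, size e = m.-1, sumn e = E,
         prec1 c e & prec1 d e]) <->
      (E = \sum_(2 <= i < m.+1) maxn (at_ c i) (at_ d i) \/
       maxn (at_ c 1) (at_ d 1) + \sum_(3 <= i < m.+1) maxn (at_ c i) (at_ d i)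
         <= E)))).
Proof.
move=> /partP Hc /partP Hd Hsc Hsd Hne f f' M smin smax.
have [HL0 HLm HLne HLeq] := @ell_facts c d m Hsc Hsd Hne.
have HLs := @ell_sym c d m Hsc Hsd.
have [F0 FL F2 F3] := @fidx_facts c d HL0.
have HL0' : 0 < ell d c by rewrite HLs.
have [G0 GL G2 G3] := @fidx_facts d c HL0'.
rewrite HLs in GL G3.
have H : Hyp c d m (ell c d) (fidx c d).-1 (fidx d c).-1.
  split; first by split.
  split.
  - by split.
  - split; first by lia.
    + case/orP: F2 => [/eqP -> | H2]; [by left | right].
      exact: H2.
    + move=> k Hk; have := F3 k.+1 ltac:(lia).
      by rewrite /at_ /= -leqNgt.
  - split; first by lia.
    + case/orP: G2 => [/eqP -> | H2]; [by left | right].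
      exact: H2.
    + move=> k Hk; have := G3 k.+1 ltac:(lia).
      by rewrite /at_ /= -leqNgt.
have Esmin : smin = smin0 c d m by rewrite /smin big_add1.
have Esmax : smax = smax0 c d m by rewrite /smax big_add1.
have EM : M = maxn (nth 0 c (fidx c d).-1) (nth 0 d (fidx d c).-1) by [].
split.
  by rewrite Esmin EM; apply: part1 H.
split.
  by move=> Hf Hf'; rewrite Esmax EM; apply: (part2 E H); rewrite /f /f' in Hf Hf'; lia.
move=> Hf1.
have Hp : (fidx c d).-1 = 0 \/ (fidx d c).-1 = 0.
  by rewrite /f /f' in Hf1; case: Hf1 => ->; [left | right].
have S2E : \sum_(2 <= i < m.+1) maxn (at_ c i) (at_ d i) =
           \sum_(1 <= i < m) maxn (nth 0 c i) (nth 0 d i).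
  by rewrite big_add1.
have S3E : \sum_(3 <= i < m.+1) maxn (at_ c i) (at_ d i) =
           \sum_(2 <= i < m) maxn (nth 0 c i) (nth 0 d i).
  by rewrite big_add1.
split; last first.
  by move=> Hm; rewrite (part3b E H Hp Hm) S2E S3E.
case: (ltnP 1 m) => Hm.
- rewrite (part3b E H Hp Hm).
  have [EM2 EO] : M = maxn (nth 0 c 0) (nth 0 d 0) /\
      omaxn (xat c f.+1) (xat d f'.+1) = Some (maxn (nth 0 c 1) (nth 0 d 1)).
    rewrite EM /f /f'.
    case: Hp => Hp.
    + have := p3_consts H Hp Hm; rewrite !prednK //.
    + have := p3_consts (Hyp_sym H) Hp Hm; rewrite !prednK //.
      by rewrite maxnC omaxnC [maxn (nth 0 d 0) _]maxnC [maxn (nth 0 d 1) _]maxnC.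
  have Hsplit : \sum_(0 <= i < m) maxn (nth 0 c i) (nth 0 d i) =
     maxn (nth 0 c 0) (nth 0 d 0) + (maxn (nth 0 c 1) (nth 0 d 1) +
       \sum_(2 <= i < m) maxn (nth 0 c i) (nth 0 d i)).
    by rewrite [LHS]big_ltn ?[\sum_(1 <= i < m) _]big_ltn //; lia.
  rewrite EO EM2 Esmax /smax0 Hsplit [\sum_(1 <= i < m) _]big_ltn; last by lia.
  split; case=> HH; [left | right | left | right]; lia.
- have Em : m = 1 by lia.
  have EL : ell c d = 1 by lia.
  have Ef : fidx c d = 1 by lia.
  have Ef' : fidx d c = 1 by lia.
  have Esm : smax = maxn (nth 0 c 0) (nth 0 d 0) by rewrite Esmax /smax0 Em big_nat1.
  have EM' : M = maxn (nth 0 c 0) (nth 0 d 0) by rewrite EM Ef Ef'.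
  have EO : omaxn (xat c f.+1) (xat d f'.+1) = None.
    by rewrite /f /f' Ef Ef' /xat /= Hsc Hsd Em.
  rewrite EO Esm EM'.
  split.
  + move=> [e [_ Hse <- _ _]].
    by left; move: Hse; rewrite Em; case: e.
  + case => // HE.
    exists [::]; split => //=.
    * by rewrite Em.
    * lia.
    * by apply/prec1P; split; [rewrite Hsc Em | exists 0; split].
    * by apply/prec1P; split; [rewrite Hsd Em | exists 0; split].
Qed.
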